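(* Let $d\ge2$, let $\omega$ be any configuration, and let $C^*$ be an open dual cluster. Then \[ \partial B_{C^*}=\bigcup_{e^*\in\Delta C^*}Q_{e^*}, \] where $\partial$ denotes the topological boundary in $\mathbb{R}^d$.
   Context: Dual lattice: vertices $(\mathbb{Z}^d)^*=\mathbb{Z}^d+(1/2,\dots,1/2)$, dual bonds $\langle x^*,y^*\rangle$ with $\|x^*-y^*\|_1=1$. For $x^*\in(\mathbb{Z}^d)^*$, $B_{x^*}=\prod_{i=1}^d[(x^* )_i-1/2,(x^* )_i+1/2]$, and for a dual bond $e^*=\langle x^*,y^*\rangle$, $Q_{e^*}=B_{x^*}\cap B_{y^*}$ (a $(d-1)$-dimensional unit face). Given a configuration in which each dual bond is open or closed, an open dual cluster $C^*$ is a connected component (possibly a single vertex) of the graph of open dual bonds; $B_{C^*}=\bigcup_{x^*\in C^*}B_{x^*}$, and $\Delta C^*$ is the set of dual bonds with exactly one endpoint in $C^*$. *)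

(* Defs.v *)
From HB Require Import structures.
From mathcomp Require Import all_boot all_order all_algebra.
From mathcomp Require Import all_classical all_reals all_analysis.
From Stdlib Require Import Relations.
Import numFieldNormedType.Exports.
Set Implicit Arguments. Unset Strict Implicit. Unset Printing Implicit Defensive.
Import Order.TTheory GRing.Theory Num.Theory.
Local Open Scope classical_set_scope.
Local Open Scope ring_scope.

(* A dual vertex x* = z + (1/2,...,1/2) is represented by its integer part
   z : 'I_d -> int. *)
Definition dvertex (d : nat) := 'I_d -> int.

Definition shift (d : nat) (z : dvertex d) (i : 'I_d) : dvertex d :=
  fun j => if j == i then z j + 1 else z j.

(* Every dual bond is uniquely of the form <z, z + e_i>; we index dual bonds
   by pairs (i, z).  A configuration assigns open (true) / closed (false)
   to each dual bond. *)
Definition config (d : nat) := 'I_d -> dvertex d -> bool.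

Definition open_adj (d : nat) (w : config d) (x y : dvertex d) : Prop :=
  exists i : 'I_d, (y = shift x i /\ w i x) \/ (x = shift y i /\ w i y).

Definition dual_cluster (d : nat) (w : config d) (x0 : dvertex d) : set (dvertex d) :=
  [set y | clos_refl_trans _ (@open_adj d w) x0 y].

Definition dual_coord (R : realType) (d : nat) (z : dvertex d) (i : 'I_d) : R :=
  (z i)%:~R + 2^-1.

Definition box (R : realType) (d : nat) (z : dvertex d) : set 'rV[R]_d :=
  [set p | forall i : 'I_d,
     dual_coord R z i - 2^-1 <= p ord0 i <= dual_coord R z i + 2^-1].

Arguments dual_coord R {d} z i.
Arguments box R {d} z.

Definition face (R : realType) (d : nat) (i : 'I_d) (z : dvertex d) : set 'rV[R]_d :=
  box R z `&` box R (shift z i).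

Arguments face R {d} i z.

Definition cluster_box (R : realType) (d : nat) (C : set (dvertex d)) : set 'rV[R]_d :=
  \bigcup_(z in C) box R z.

Arguments cluster_box R {d} C.

Definition edge_boundary (d : nat) (C : set (dvertex d)) : set ('I_d * dvertex d) :=
  [set e | (C e.2 /\ ~ C (shift e.2 e.1)) \/ (~ C e.2 /\ C (shift e.2 e.1))].

Definition topo_boundary (T : topologicalType) (A : set T) : set T :=
  closure A `\` interior A.

(* Main.v *)
Require Import Defs.
From HB Require Import structures.
From mathcomp Require Import all_boot all_order all_algebra.
From mathcomp Require Import all_classical all_reals all_analysis.
From mathcomp Require Import lra zify.
Import Order.TTheory GRing.Theory Num.Theory.
Import numFieldNormedType.Exports.
Local Open Scope classical_set_scope.
Local Open Scope ring_scope.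

Section S.
Variable (R : realType).

Lemma boxE d (z : dvertex d) (p : 'rV[R]_d) :
  box R z p <-> forall i, (z i)%:~R <= p ord0 i <= (z i)%:~R + 1.
Proof.
rewrite /box /dual_coord /=.
have h2 : (2^-1 + 2^-1 : R) = 1 by lra.
by split => h i; move: (h i); rewrite addrK -addrA h2.
Qed.

Lemma window (a : R) : exists2 r : R, 0 < r &
  forall m : int, `|m%:~R - a| < r -> m%:~R = a.
Proof.
set f := Num.floor a.
have [fa1 fa2] : (f%:~R <= a) /\ (a < (f + 1)%:~R).
  by have /andP[] := floor_itv a.
case: (eqVneq (f%:~R) a) => [ea|nea].
  exists 1 => // m; rewrite -ea -rmorphB /= ltr_norml => /andP[h1 h2].
  have h3 : (m - f < 1)%R by rewrite -(ltr_int R).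
  have h4 : (-1 < m - f)%R by rewrite -(ltr_int R) mulrNz.
  have -> : m = f by lia.
  done.
have fa : f%:~R < a by rewrite lt_neqAle nea fa1.
exists (Num.min (a - f%:~R) ((f+1)%:~R - a)).
  by rewrite lt_min !subr_gt0 fa fa2.
move=> m; rewrite lt_min => /andP[h1 h2].
exfalso.
case: (leP m f) => hm.
  have : (m%:~R : R) <= f%:~R by rewrite ler_int.
  move: h1; rewrite ltr_norml => /andP[h1 _]. lra.
have : ((f+1)%:~R : R) <= m%:~R by rewrite ler_int; lia.
move: h2; rewrite ltr_norml => /andP[_ h2]. lra.
Qed.
End S.
Section T.
Variable (R : realType).
Lemma L1 (p x r : R) (k : int) :
  (forall m : int, `|m%:~R - p| < r -> m%:~R = p) -> `|x - p| < r ->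
  (k%:~R <= x <= k%:~R + 1) -> k%:~R <= p <= k%:~R + 1.
Proof.
move=> W + /andP[h1 h2]; rewrite ltr_norml => /andP[h3 h4].
apply/andP; split.
  rewrite leNgt; apply/negP => hk.
  have := W k; rewrite ltr_norml. have -> : (- r < k%:~R - p) by lra.
  have -> : (k%:~R - p < r) by lra.
  move=> /(_ isT) e; lra.
rewrite leNgt; apply/negP => hk.
have := W (k+1); rewrite rmorphD /= ltr_norml. have -> : (- r < k%:~R + 1 - p) by lra.
have -> : (k%:~R + 1 - p < r) by lra.
move=> /(_ isT) e; lra.
Qed.

Lemma ballrv d (p q : 'rV[R]_d) e :
  ball p e q <-> (0 < e /\ forall j, `|p ord0 j - q ord0 j| < e).
Proof.
rewrite /ball /= /mx_ball; split => -[e0 h]; split => //.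
  move=> j; exact: h.
move=> i j; rewrite (ord1 i) /ball /=; exact: h.
Qed.
End T.
Section W.
Variable (R : realType) (d : nat).
Implicit Types (C : set (dvertex d)) (p : 'rV[R]_d).

Lemma walk C z y p : C z -> ~ C y -> box R z p -> box R y p ->
  exists e, edge_boundary C e /\ face R e.1 e.2 p.
Proof.
move=> Cz nCy /boxE bz /boxE bY.
pose v (n : nat) : dvertex d := fun j => if (j < n)%N then y j else z j.
have v0 : v 0%N = z by apply/funext => j.
have vd : v d = y by apply/funext => j; rewrite /v ltn_ord.
have bv : forall n, box R (v n) p.
  by move=> n; apply/boxE => j; rewrite /v; case: ifP.
have ivt : forall n, (n <= d)%N -> ~ C (v n) ->
    exists k, [/\ (k < n)%N, C (v k) & ~ C (v k.+1)].
  elim=> [|n IH] hn hC; first by rewrite v0 in hC.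
  have [Cn|nCn] := pselect (C (v n)).
    by exists n; split.
  have [k [hk h1 h2]] := IH (ltnW hn) nCn.
  by exists k; split => //; apply: ltnW.
have nCd : ~ C (v d) by rewrite vd.
have [k [hk Ck nCk]] := ivt d (leqnn d) nCd.
pose i := Ordinal hk.
have [lo1 hi1] : ((z i <= y i + 1)%R /\ (y i <= z i + 1)%R).
  have /andP[a1 a2] := bz i; have /andP[b1 b2] := bY i.
  split; rewrite -(ler_int R) rmorphD /=; lra.
have vE : forall j : 'I_d, v k.+1 j = if j == i then y j else v k j.
  move=> j; rewrite /v; case: eqP => [->|/eqP ne]; first by rewrite /= ltnSn.
  rewrite ltnS leq_eqVlt; suff -> : (nat_of_ord j == k) = false by [].
  by apply/eqP => e; move/eqP: ne; apply; apply: val_inj; rewrite /= e.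
have viz : v k i = z i by rewrite /v /= ltnn.
have : (y i = z i) \/ (y i = z i + 1) \/ (z i = y i + 1) by lia.
case=> [e|[e|e]].
- exfalso; apply: nCk; suff -> : v k.+1 = v k by [].
  by apply/funext => j; rewrite vE; case: eqP => // ->; rewrite e viz.
- exists (pair i (v k)); split.
    left; split => //; suff <- : v k.+1 = Defs.shift (v k) i by [].
    apply/funext => j; rewrite vE /Defs.shift; case: eqP => // ->; by rewrite e viz.
  split => //=; suff <- : v k.+1 = Defs.shift (v k) i by [].
  apply/funext => j; rewrite vE /Defs.shift; case: eqP => // ->; by rewrite e viz.
- have sh : Defs.shift (v k.+1) i = v k.
    apply/funext => j; rewrite /Defs.shift vE; case: eqP => [->|//]; by rewrite viz e.
  exists (pair i (v k.+1)); split.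
    by right; split => //=; rewrite sh.
  by split => //=; rewrite sh.
Qed.
End W.
Section M.
Variable (R : realType) (d : nat).
Implicit Types (C : set (dvertex d)) (p : 'rV[R]_d).

Lemma boundary_sub C p : topo_boundary (cluster_box R C) p ->
  (\bigcup_(e in edge_boundary C) face R e.1 e.2) p.
Proof.
case=> [clp nip].
have W : forall j : 'I_d, exists r : R, 0 < r /\
   forall m : int, `|m%:~R - p ord0 j| < r -> m%:~R = p ord0 j.
  by move=> j; have [r r0 hr] := @window R (p ord0 j); exists r.
have [rf hrf] := choice W.
pose N := [set q : 'rV[R]_d | forall j, `|q ord0 j - p ord0 j| < rf j].
have nN : nbhs p N.
  apply: (@filter_forall _ _ (fun j => [set q : 'rV[R]_d | `|q ord0 j - p ord0 j| < rf j]) (nbhs p)) => j; apply/nbhs_ballP; exists (rf j); first by case: (hrf j).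
  by move=> q /ballrv [_ h] /=; rewrite distrC; apply: h.
have L1' : forall (q : 'rV[R]_d) (k : dvertex d), N q -> box R k q -> box R k p.
  move=> q k Nq /boxE bq; apply/boxE => j.
  exact: (@L1 R (p ord0 j) (q ord0 j) (rf j) (k j) (proj2 (hrf j)) (Nq j) (bq j)).
have [q [[z Cz bz] Nq]] := clp N nN.
have bpz := L1' _ _ Nq bz.
have [q' [Nq' nBq']] : exists q', N q' /\ ~ cluster_box R C q'.
  apply: contra_notP nip => h; apply: filterS nN => q2 Nq''.
  by apply: contra_notP h => nq; exists q2.
pose y : dvertex d := fun j => Num.floor (q' ord0 j).
have byq : box R y q'.
  apply/boxE => j; have /andP[f1 f2] := floor_itv (q' ord0 j).
  by rewrite /y f1 /= ltW // -[1]/(1%:~R) -rmorphD.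
have nCy : ~ C y by move=> Cy; apply: nBq'; exists y.
have [e [he hf]] := @walk R d C z y p Cz nCy bpz (L1' _ _ Nq' byq).
by exists e.
Qed.
End M.
Section N.
Variable (R : realType) (d : nat).
Implicit Types (C : set (dvertex d)) (p : 'rV[R]_d).

Lemma boundary_sup C z y p : C z -> ~ C y -> box R z p -> box R y p ->
  topo_boundary (cluster_box R C) p.
Proof.
move=> Cz nCy bz /boxE bY; split; first by apply: subset_closure; exists z.
move=> /nbhs_ballP [e e0 he].
pose t := Num.min 1 e.
have t0 : 0 < t by rewrite lt_min ltr01 e0.
have t1 : t <= 1 by rewrite ge_min lexx.
have te : t <= e by rewrite ge_min lexx orbT.
pose q : 'rV[R]_d := \row_j (p ord0 j + t * ((y j)%:~R + 2^-1 - p ord0 j)).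
have qb : forall j, (y j)%:~R < q ord0 j < (y j)%:~R + 1.
  move=> j; rewrite mxE; have /andP[a1 a2] := bY j; apply/andP; split; nra.
have : cluster_box R C q.
  apply: he; apply/ballrv; split => // j; rewrite mxE.
  have /andP[a1 a2] := bY j; rewrite ltr_norml; apply/andP; split; nra.
case=> z' Cz' /boxE bz'.
apply: nCy; suff <- : z' = y by [].
apply/funext => j.
have /andP[a1 a2] := bz' j; have /andP[b1 b2] := qb j.
have h1 : (z' j < y j + 1)%R by rewrite -(ltr_int R) rmorphD /=; lra.
have h2 : (y j < z' j + 1)%R by rewrite -(ltr_int R) rmorphD /=; lra.
lia.
Qed.
End N.
Theorem lemma3p2 (R : realType) (d : nat) (hd : (2 <= d)%N)
  (w : config d) (x0 : dvertex d) :
  topo_boundary (cluster_box R (dual_cluster w x0)) =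
  \bigcup_(e in edge_boundary (dual_cluster w x0)) face R e.1 e.2.
Proof.
apply/seteqP; split => p.
  exact: boundary_sub.
case=> -[i u] /= hE [b1 b2].
case: hE => /= [[Cu nCs]|[nCu Cs]].
  exact: (@boundary_sup R d _ _ _ p Cu nCs b1 b2).
exact: (@boundary_sup R d _ _ _ p Cs nCu b2 b1).
Qed.
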